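(* For every DBI normal formula $\varphi$ and every pointed Kripke model $(\mathcal{M},v)$, the pointed update of $(\mathcal{M},v)$ with $(\mathcal{U}_\varphi,0)$ is defined and $\mathcal{M}\odot\mathcal{U}_\varphi,(v,0)\vDash\varphi$.
   Context: Agents $\mathcal{A}=\{1,\dots,n\}$, $n>1$; language $\mathcal{L}$: $\varphi ::= p \mid \neg\varphi \mid (\varphi\wedge\varphi)\mid B_i\varphi$, with $\top$ the usual tautology. Kripke model $\mathcal{M}=\langle S,R,V\rangle$ (nonempty $S$, $R_i\subseteq S\times S$, $V:\mathit{Prop}\to 2^S$), standard truth ($\mathcal{M},w\vDash B_i\varphi$ iff $\varphi$ holds at all $R_i$-successors). Action model $\mathcal{U}=\langle E,Q,\mathsf{pre}\rangle$ (nonempty $E$, $Q_i\subseteq E\times E$, $\mathsf{pre}:E\to\mathcal{L}$). Pointed update of $(\mathcal{M},w)$ with $(\mathcal{U},\alpha)$, defined iff $\mathcal{M},w\vDash\mathsf{pre}(\alpha)$: with $T=\{(x,\beta)\in S\times E\mid\mathcal{M},x\vDash\mathsf{pre}(\beta)\}$, $\mathcal{M}\odot\mathcal{U}=\langle S^{\mathcal U},R^{\mathcal U},V^{\mathcal U}\rangle$, where $S^{\mathcal U}$ is the smallest subset of $T$ containing $(w,\alpha)$ closed under: $(x,\beta)\in S^{\mathcal U}$, $(u,\gamma)\in T$, $xR_iu$, $\beta Q_i\gamma$ imply $(u,\gamma)\in S^{\mathcal U}$; $R^{\mathcal U}_i$ relates $(x,\beta),(u,\gamma)\in S^{\mathcal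 U}$ iff $xR_iu$ and $\beta Q_i\gamma$; $V^{\mathcal U}(p)=\{(x,\beta)\in S^{\mathcal U}\mid x\in V(p)\}$. The resulting pointed model is $(\mathcal{M}\odot\mathcal{U},(w,\alpha))$. Target agents: $\mathsf{ta}(p)=\varnothing$, $\mathsf{ta}(\neg\phi)=\mathsf{ta}(\phi)$, $\mathsf{ta}(\phi\wedge\psi)=\mathsf{ta}(\phi)\cup\mathsf{ta}(\psi)$, $\mathsf{ta}(B_i\phi)=\{i\}$. DBI formulas: $\varphi ::= B_i\xi \mid B_i(\xi\wedge\varphi)\mid(\varphi\wedge\varphi)\mid B_i\varphi$ with $\xi$ purely propositional. DBI normal: $B_i\xi$ always; $B_i\varphi$ and $B_i(\xi\wedge\varphi)$ iff $\varphi$ is DBI normal and $i\notin\mathsf{ta}(\varphi)$; $\varphi\wedge\psi$ iff both are DBI normal and $\mathsf{ta}(\varphi)\cap\mathsf{ta}(\psi)=\varnothing$. The action model $\mathcal{U}_\varphi=\langle E^\varphi,Q^\varphi,\mathsf{pre}^\varphi\rangle$ for DBI normal $\varphi$ is defined recursively; always $E^\varphi=\{0,-1\}\sqcup D^\varphi$ with $\varnothing\neq D^\varphi\subseteq\{1,2,\dots\}$, $\mathsf{pre}^\varphi(0)=\mathsf{pre}^\varphi(-1)=\top$. For a relation $Q_j$ write $\underline{Q}_j=Q_j\cap((E\setminus\{0\})\times(E\setminus\{0\}))$. (1) $\varphi=B_i\xi$, $\xi$ propositional: $D^\varphi=\{m\}$, $\mathsf{pre}(m)=\xi$, $Q_j=\{(0,-1),(m,-1),(-1,-1)\}$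 for $j\neq i$, $Q_i=\{(0,m),(m,m),(-1,-1)\}$. (2) $\varphi=B_i\psi$, $\psi$ DBI normal: with a fresh $m\geq1$, $m\notin D^\psi$, let $D^\varphi=D^\psi\sqcup\{m\}$, $\mathsf{pre}^\varphi$ extends $\mathsf{pre}^\psi$ by $\mathsf{pre}^\varphi(m)=\top$, $Q^\varphi_j=\underline{Q}^\psi_j\cup\{(0,-1)\}\cup\{(m,k)\mid(0,k)\in Q^\psi_j\}$ for $j\neq i$, and $Q^\varphi_i=\underline{Q}^\psi_i\cup\{(0,m),(m,m)\}$. (3) $\varphi=B_i(\xi\wedge\psi)$, $\xi$ propositional, $\psi$ DBI normal: as in (2) except $\mathsf{pre}^\varphi(m)=\xi$. (4) $\varphi=\psi\wedge\theta$ with $\psi,\theta$ DBI normal: rename so that $D^\psi\cap D^\theta=\varnothing$; $D^\varphi=D^\psi\sqcup D^\theta$, $\mathsf{pre}^\varphi=\mathsf{pre}^\psi\cup\mathsf{pre}^\theta$, and for every $j$: $Q^\varphi_j=\underline{Q}^\psi_j\cup\underline{Q}^\theta_j\cup\{(0,k)\mid (0,k)\in Q^\psi_j\cup Q^\theta_j,\ k\in D^\psi\sqcup D^\theta\}\cup\{(0,-1)\mid \text{there is no } k\in D^\psi\sqcup D^\theta \text{ with } (0,k)\in Q^\psi_j\cup Q^\theta_j\}$. *)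

(* Defs.v *)
From mathcomp Require Import all_boot.
From Stdlib Require Import ZArith List.

Unset Printing Implicit Defensive.

Section DEL.
(* agents are the n elements of 'I_n (standing for {1,...,n}) *)
Variable n : nat.
Notation agent := 'I_n.

Inductive form : Type :=
| Var of nat
| Neg of form
| And of form & form
| Bel of agent & form.

Definition top : form := Neg (And (Var 0) (Neg (Var 0))).

Record kmodel : Type := KModel {
  st : Type;
  krel : agent -> st -> st -> Prop;
  kval : nat -> st -> Prop }.

Fixpoint sat (M : kmodel) (w : st M) (phi : form) : Prop :=
  match phi with
  | Var p => kval M p w
  | Neg a => ~ sat M w a
  | And a b => sat M w a /\ sat M w b
  | Bel i a => forall u, krel M i w u -> sat M u a
  end.

(* Action models whose event set is {0,-1} ⊔ D with D a list of integers
   (for the models U_phi, D consists of positive integers). *)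
Record amodel : Type := AModel {
  evD : list Z;
  arel : agent -> Z -> Z -> Prop;
  pre : Z -> form }.

Definition inE (U : amodel) (e : Z) : Prop :=
  e = 0%Z \/ e = (-1)%Z \/ In e (evD U).

Definition upd_defined (M : kmodel) (w : st M) (U : amodel) (a : Z) : Prop :=
  inE U a /\ sat M w (pre U a).

Definition Tset (M : kmodel) (U : amodel) (p : st M * Z) : Prop :=
  inE U p.2 /\ sat M p.1 (pre U p.2).

Inductive SU (M : kmodel) (U : amodel) (w : st M) (a : Z) : st M * Z -> Prop :=
| SU_base : Tset M U (w, a) -> SU M U w a (w, a)
| SU_step i x b u c : SU M U w a (x, b) -> Tset M U (u, c) ->
    krel M i x u -> arel U i b c -> SU M U w a (u, c).

Definition upd_model (M : kmodel) (U : amodel) (w : st M) (a : Z) : kmodel :=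
  {| st := {p : st M * Z | SU M U w a p};
     krel := fun i p q => krel M i (proj1_sig p).1 (proj1_sig q).1 /\ arel U i (proj1_sig p).2 (proj1_sig q).2;
     kval := fun p s => kval M p (proj1_sig s).1 |}.

Definition upd_point (M : kmodel) (U : amodel) (w : st M) (a : Z)
  (H : upd_defined M w U a) : st (upd_model M U w a) :=
  exist _ (w, a) (SU_base M U w a H).

Fixpoint ta (phi : form) : agent -> bool :=
  match phi with
  | Var _ => fun _ => false
  | Neg a => ta a
  | And a b => fun j => ta a j || ta b j
  | Bel i _ => fun j => j == i
  end.

Fixpoint is_prop (phi : form) : bool :=
  match phi with
  | Var _ => true
  | Neg a => is_prop a
  | And a b => is_prop a && is_prop b
  | Bel _ _ => false
  end.

Inductive dbi_normal : form -> Prop :=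
| dbiN_B i xi : is_prop xi -> dbi_normal (Bel i xi)
| dbiN_BB i psi : dbi_normal psi -> ~~ ta psi i -> dbi_normal (Bel i psi)
| dbiN_BA i xi psi : is_prop xi -> dbi_normal psi -> ~~ ta psi i ->
    dbi_normal (Bel i (And xi psi))
| dbiN_And a b : dbi_normal a -> dbi_normal b ->
    (forall j, ~~ (ta a j && ta b j)) -> dbi_normal (And a b).

Definition maxD (D : list Z) : Z := fold_right Z.max 0%Z D.

Definition under (U : amodel) (j : agent) (a b : Z) : Prop :=
  arel U j a b /\ inE U a /\ inE U b /\ a <> 0%Z /\ b <> 0%Z.

(* case (1): phi = B_i xi, with m = 1 *)
Definition U1 (i : agent) (xi : form) : amodel :=
  {| evD := 1%Z :: nil;
     arel := fun j a b =>
       if j == i then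
         (a = 0%Z /\ b = 1%Z) \/ (a = 1%Z /\ b = 1%Z) \/ (a = (-1)%Z /\ b = (-1)%Z)
       else
         (a = 0%Z /\ b = (-1)%Z) \/ (a = 1%Z /\ b = (-1)%Z) \/ (a = (-1)%Z /\ b = (-1)%Z);
     pre := fun e => if Z.eqb e 1 then xi else top |}.

(* cases (2) and (3): fresh m = max D^psi + 1, pre(m) = pm
   (pm = top for case (2), pm = xi for case (3)) *)
Definition U23 (i : agent) (pm : form) (Up : amodel) : amodel :=
  let m := (maxD (evD Up) + 1)%Z in
  {| evD := m :: evD Up;
     arel := fun j a b =>
       if j == i then
         under Up i a b \/ (a = 0%Z /\ b = m) \/ (a = m /\ b = m)
       else
         under Up j a b \/ (a = 0%Z /\ b = (-1)%Z) \/ (a = m /\ arel Up j 0%Z b);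
     pre := fun e => if Z.eqb e m then pm else pre Up e |}.

Definition shiftZ (k e : Z) : Z := if Z.ltb 0 e then (e + k)%Z else e.

Definition rename (k : Z) (U : amodel) : amodel :=
  {| evD := map (shiftZ k) (evD U);
     arel := fun j a b => exists a' b', a = shiftZ k a' /\ b = shiftZ k b' /\ arel U j a' b';
     pre := fun e => if Z.ltb 0 e then pre U (e - k)%Z else pre U e |}.

(* case (4): phi = psi /\ theta; theta's positive events are shifted past those of psi *)
Definition U4 (Up Ut0 : amodel) : amodel :=
  let Ut := rename (maxD (evD Up)) Ut0 in
  let D := evD Up ++ evD Ut in
  {| evD := D;
     arel := fun j a b =>
       under Up j a b \/ under Ut j a b \/
       (a = 0%Z /\ (arel Up j 0%Z b \/ arel Ut j 0%Z b) /\ In b D) \/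
       (a = 0%Z /\ b = (-1)%Z /\
          ~ (exists k, In k D /\ (arel Up j 0%Z k \/ arel Ut j 0%Z k)));
     pre := fun e => if existsb (Z.eqb e) (evD Up) then pre Up e else pre Ut e |}.

(* junk value for formulas outside the DBI fragment *)
Definition Ujunk : amodel :=
  {| evD := 1%Z :: nil; arel := fun _ _ _ => False; pre := fun _ => top |}.

Fixpoint Uphi (phi : form) : amodel :=
  match phi with
  | Bel i chi =>
      if is_prop chi then U1 i chi
      else match chi with
           | And xi psi => if is_prop xi then U23 i xi (Uphi psi) else U23 i top (Uphi chi)
           | _ => U23 i top (Uphi chi)
           end
  | And a b => U4 (Uphi a) (Uphi b)
  | _ => Ujunk
  end.

End DEL.

Arguments st {n}.
Arguments krel {n}.
Arguments kval {n}.
Arguments sat {n}.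
Arguments evD {n}.
Arguments arel {n}.
Arguments pre {n}.
Arguments inE {n}.
Arguments upd_defined {n}.
Arguments upd_model {n}.
Arguments upd_point {n M U w a}.
Arguments ta {n}.
Arguments is_prop {n}.
Arguments dbi_normal {n}.
Arguments Uphi {n}.
Arguments top {n}.

(* Main.v *)
From Pilot Require Import Defs.
From mathcomp Require Import all_boot.
From Stdlib Require Import ZArith List Lia.

Arguments Var {n}.
Arguments Neg {n}.
Arguments And {n}.
Arguments Bel {n}.
Notation inEv := Pilot.Defs.inE.
Fixpoint posf {n} (phi : form n) : bool :=
  match phi with Var _ => true | Neg a => is_prop a | And a b => posf a && posf b | Bel _ a => posf a end.
Fixpoint topshape {n} (phi : form n) : bool :=
  match phi with Var _ => false | Neg _ => false | And a b => topshape a && topshape b | Bel _ a => posf a end.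

Fixpoint fsat {n} (M : kmodel n) (U : amodel n) (x : st M) (e : Z) (phi : form n) : Prop :=
  match phi with
  | Var p => kval M p x
  | Neg a => ~ fsat M U x e a
  | And a b => fsat M U x e a /\ fsat M U x e b
  | Bel j a => forall u c, krel M j x u -> arel U j e c -> Tset n M U (u, c) -> fsat M U u c a
  end.

Lemma SU_Tset {n} (M : kmodel n) U w a0 p : SU n M U w a0 p -> Tset n M U p.
Proof. intros H; destruct H; assumption. Qed.

Lemma sat_fsat {n} (M : kmodel n) U w a0 (phi : form n) :
  forall p : st (upd_model M U w a0),
  sat (upd_model M U w a0) p phi <-> fsat M U (proj1_sig p).1 (proj1_sig p).2 phi.
Proof.
  induction phi as [p|a IH|a IHa b IHb|j a IH]; intros [[x e] Hp]; simpl.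
  - tauto.
  - specialize (IH (exist _ (x,e) Hp)); simpl in IH; tauto.
  - specialize (IHa (exist _ (x,e) Hp)); specialize (IHb (exist _ (x,e) Hp)); simpl in *; tauto.
  - split.
    + intros H u c Hk Ha HT.
      assert (Hq : SU n M U w a0 (u,c)) by (eapply SU_step; eauto).
      specialize (IH (exist _ (u,c) Hq)); simpl in IH; apply IH.
      apply (H (exist _ (u,c) Hq)); simpl; split; assumption.
    + intros H [[u c] Hq] [Hk Ha]; simpl in *.
      specialize (IH (exist _ (u,c) Hq)); simpl in IH; apply IH.
      apply H; auto. exact (SU_Tset _ _ _ _ _ Hq).
Qed.

Lemma prop_fsat {n} M U (phi : form n) : is_prop phi -> forall x e, fsat M U x e phi <-> sat M x phi.
Proof.
  induction phi as [p|a IH|a IHa b IHb|j a IH]; simpl; intros H x e; try discriminate.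
  - tauto.
  - specialize (IH H x e); tauto.
  - move/andP: H => [H1 H2]; specialize (IHa H1 x e); specialize (IHb H2 x e); tauto.
Qed.

Lemma prop_posf {n} (phi : form n) : is_prop phi -> posf phi.
Proof. induction phi; simpl; auto. move/andP=> [H1 H2]; rewrite IHphi1 // IHphi2 //. Qed.

Definition simul {n} (U' U : amodel n) (R : Z -> Z -> Prop) :=
  forall e' e, R e' e -> forall j c', arel U' j e' c' -> inEv U' c' ->
    exists c, arel U j e c /\ R c' c /\ inEv U c /\ pre U c = pre U' c'.

Lemma transfer {n} M (U' U : amodel n) R : simul U' U R -> forall phi, posf phi ->
  forall x e' e, R e' e -> fsat M U x e phi -> fsat M U' x e' phi.
Proof.
  intros HS; induction phi as [p|a IH|a IHa b IHb|j a IH]; simpl; intros Hp x e' e HR H.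
  - exact H.
  - intro H'; apply H. apply (prop_fsat M U a Hp x e). apply (prop_fsat M U' a Hp x e'). exact H'.
  - move/andP: Hp => [h1 h2]. destruct H; split; eauto.
  - intros u c' Hk Ha' [HiE Hpre].
    destruct (HS _ _ HR j c' Ha' HiE) as (c & Hac & HRc & HiEc & Hpc).
    eapply IH; [exact Hp|exact HRc|]. apply H; auto. split; [exact HiEc|simpl; rewrite Hpc; exact Hpre].
Qed.

Lemma transfer_root {n} M (U' U : amodel n) R : simul U' U R -> forall phi, topshape phi ->
  forall e0' e0, (forall j, ta phi j -> forall c', arel U' j e0' c' -> inEv U' c' ->
      exists c, arel U j e0 c /\ R c' c /\ inEv U c /\ pre U c = pre U' c') ->
  forall x, fsat M U x e0 phi -> fsat M U' x e0' phi.
Proof.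
  intros HS; induction phi as [p|a IH|a IHa b IHb|j a IH]; simpl; intros Hs e0' e0 Hr x H; try discriminate.
  - move/andP: Hs => [h1 h2]. destruct H; split.
    + eapply IHa; eauto. intros j Hj; apply Hr; rewrite Hj; done.
    + eapply IHb; eauto. intros j Hj; apply Hr; rewrite Hj orbT; done.
  - intros u c' Hk Ha' [HiE Hpre].
    destruct (Hr j (eqxx j) c' Ha' HiE) as (c & Hac & HRc & HiEc & Hpc).
    eapply transfer; [exact HS|exact Hs|exact HRc|]. apply H; auto. split; [exact HiEc|simpl; rewrite Hpc; exact Hpre].
Qed.

Record invU {n} (U : amodel n) (T : 'I_n -> bool) : Prop := Inv {
 i1 : forall e, In e (evD U) -> (0 < e)%Z;
 i2a : pre U 0%Z = top;
 i2b : pre U (-1)%Z = top;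
 i3a : forall j c, arel U j (-1)%Z c -> c = (-1)%Z;
 i3b : forall j, arel U j (-1)%Z (-1)%Z;
 i4 : forall j a, ~ arel U j a 0%Z;
 i5 : forall j, ~~ T j -> forall c, arel U j 0%Z c -> c = (-1)%Z;
 i6a : forall j, T j -> forall c, arel U j 0%Z c -> In c (evD U);
 i6b : forall j, T j -> exists k, In k (evD U) /\ arel U j 0%Z k }.

Lemma maxD_ge0 D : (0 <= maxD D)%Z.
Proof. induction D; simpl; lia. Qed.
Lemma maxD_ge D e : In e D -> (e <= maxD D)%Z.
Proof. induction D as [|d D IH]; simpl; [tauto|]; intros [->|H]; [lia|]; specialize (IH H); lia. Qed.
Lemma inEle {n} (U : amodel n) e : inEv U e -> (e <= maxD (evD U))%Z.
Proof. pose proof (maxD_ge0 (evD U)). intros [->|[->|H']]; [lia|lia|]. apply maxD_ge; auto. Qed.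
Lemma shift_inj k a b : (0 <= k)%Z -> shiftZ k a = shiftZ k b -> a = b.
Proof. unfold shiftZ; destruct (Z.ltb_spec 0 a), (Z.ltb_spec 0 b); lia. Qed.
Lemma shiftZ_pos k e : (0 < e)%Z -> shiftZ k e = (e + k)%Z.
Proof. unfold shiftZ; destruct (Z.ltb_spec 0 e); lia. Qed.
Lemma existsb_In e L : existsb (Z.eqb e) L = true <-> In e L.
Proof. induction L as [|a L IH]; simpl; [split; [discriminate|tauto]|].
  rewrite Bool.orb_true_iff Z.eqb_eq IH; split; intros [H|H]; auto. Qed.
Lemma dbi_notprop {n} (phi : form n) : dbi_normal phi -> is_prop phi = false.
Proof. induction 1 as [| | |a b Ha IHa Hb IHb Hd]; simpl; auto. rewrite IHa; done. Qed.
Lemma dbi_top {n} (phi : form n) : dbi_normal phi -> topshape phi.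
Proof.
  assert (G : forall psi : form n, topshape psi -> posf psi).
  { induction psi; simpl; auto; try discriminate. move/andP=>[h1 h2]; rewrite IHpsi1 // IHpsi2 //. }
  induction 1 as [i xi Hxi|i psi Hpsi IH Hnt|i xi psi Hxi Hpsi IH Hnt|a b Ha IHa Hb IHb Hd]; simpl.
  - apply prop_posf; auto.
  - apply G; auto.
  - rewrite prop_posf //=; apply G; auto.
  - rewrite IHa IHb //.
Qed.

Lemma U1_ok {n} (i : 'I_n) xi : is_prop xi ->
  invU (U1 n i xi) (ta (Bel i xi)) /\ forall M x, fsat M (U1 n i xi) x 0%Z (Bel i xi).
Proof.
  intros Hxi; split.
  - constructor; simpl.
    + intros e [<-|[]]; lia.
    + reflexivity.
    + reflexivity.
    + intros j c; case: (_ == _); lia.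
    + intros j; case: (_ == _); lia.
    + intros j a; case: (_ == _); lia.
    + intros j Hj c; rewrite (negbTE Hj); lia.
    + intros j Hj c; rewrite Hj; intros H; left; lia.
    + intros j Hj; exists 1%Z; rewrite Hj; split; [left; reflexivity|lia].
  - intros M x u c Hk Ha [HiE Hpre]; simpl in Ha; rewrite eqxx in Ha.
    assert (c = 1%Z) by lia; subst c; simpl in Hpre.
    apply prop_fsat; auto.
Qed.

Lemma U23_ok {n} (i : 'I_n) pm (Up : amodel n) psi :
  invU Up (ta psi) -> ~~ ta psi i -> topshape psi -> (forall M x, fsat M Up x 0%Z psi) ->
  let m := (maxD (evD Up) + 1)%Z in
  invU (U23 n i pm Up) (fun j => j == i) /\
  (forall M u, fsat M (U23 n i pm Up) u m psi) /\
  (forall c, arel (U23 n i pm Up) i 0%Z c -> c = m) /\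
  pre (U23 n i pm Up) m = pm.
Proof.
  intros Hinv Hnt Hts Hf m.
  have Hm0 : (0 < m)%Z by (pose proof (maxD_ge0 (evD Up)); lia).
  have Hm : forall e, inEv Up e -> e <> m by (intros e He; pose proof (inEle _ _ He); lia).
  have HmIn : ~ In m (evD Up) by (intros H; apply (Hm m); auto; right; right; auto).
  split; [|split; [|split]].
  - constructor; cbn -[Z.eqb maxD eq_op]; fold m.
    + intros e [<-|H]; [lia|apply (i1 _ _ Hinv); auto].
    + destruct (Z.eqb_spec 0 m); [lia|apply (i2a _ _ Hinv)].
    + destruct (Z.eqb_spec (-1) m); [lia|apply (i2b _ _ Hinv)].
    + intros j c; case: (j == i); (intros [H|[H|H]]; [apply (i3a _ _ Hinv _ _ (proj1 H))|lia|lia]).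
    + intros j; case: (j == i); left; (split; [apply (i3b _ _ Hinv)|split; [right; left; auto|split; [right;left;auto|lia]]]).
    + intros j a; case: (j == i); (intros [H|[H|H]]; [unfold under in H; tauto|lia|]).
      * lia.
      * destruct H as [_ H]; apply (i4 _ _ Hinv _ _ H).
    + intros j Hj c; rewrite (negbTE Hj); intros [H|[H|H]]; [unfold under in H; tauto|lia|lia].
    + intros j Hj c; rewrite Hj; intros [H|[H|H]]; [unfold under in H; tauto|left; lia|lia].
    + intros j Hj; exists m; rewrite Hj; split; [left; reflexivity|right; left; auto].
  - intros M u.
    apply (transfer_root M (U23 n i pm Up) Up (fun e' e => e' = e /\ inEv Up e /\ e <> 0%Z)) with (e0 := 0%Z); auto.
    + intros e' e [-> [HiE Hne]] j c' Ha' HiE'.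
      have Hem := Hm e HiE.
      have Hu : under n Up j e c'.
      { move: Ha'; cbn -[Z.eqb maxD eq_op]; fold m; case: eqP => [->|_]; intros [H|[H|H]]; (assumption || lia). }
      destruct Hu as (Ha & _ & HiEc & _ & Hc0).
      exists c'; split; [exact Ha|]; split; [split; auto|]; split; [auto|].
      cbn -[Z.eqb maxD eq_op]; fold m. destruct (Z.eqb_spec c' m); [exfalso; apply (Hm c'); auto|reflexivity].
    + intros j Hj c' Ha' HiE'.
      have Hji : (j == i) = false.
      { apply/eqP => Heq; subst; rewrite Hj in Hnt; discriminate. }
      move: Ha'; cbn -[Z.eqb maxD eq_op]; fold m; rewrite Hji; intros [H|[H|[_ H]]].
      * exfalso; destruct H as (_ & H & _); apply (Hm m H); reflexivity.
      * lia.
      * have HIn := i6a _ _ Hinv j Hj c' H.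
        have Hc0 := i1 _ _ Hinv c' HIn.
        exists c'; split; [exact H|]; split; [split; [auto|split; [right; right; auto|lia]]|].
        split; [right; right; auto|].
        cbn -[Z.eqb maxD eq_op]; fold m. destruct (Z.eqb_spec c' m); [exfalso; apply HmIn; congruence|reflexivity].
  - intros c; cbn -[Z.eqb maxD eq_op]; fold m; rewrite eqxx; intros [H|[H|H]]; [unfold under in H; tauto|lia|lia].
  - cbn -[Z.eqb maxD eq_op]; fold m; rewrite Z.eqb_refl; reflexivity.
Qed.

Tactic Notation "cbnU" := cbn -[Z.eqb maxD eq_op shiftZ Z.ltb].
Tactic Notation "cbnU" "in" hyp(H) := cbn -[Z.eqb maxD eq_op shiftZ Z.ltb] in H.

Lemma U4_ok {n} (Up Ut0 : amodel n) psi theta :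
  invU Up (ta psi) -> invU Ut0 (ta theta) -> (forall j, ~~ (ta psi j && ta theta j)) ->
  topshape psi -> topshape theta ->
  (forall M x, fsat M Up x 0%Z psi) -> (forall M x, fsat M Ut0 x 0%Z theta) ->
  invU (U4 n Up Ut0) (ta (And psi theta)) /\ forall M x, fsat M (U4 n Up Ut0) x 0%Z (And psi theta).
Proof.
  intros Hp Ht Hdis Hsp Hst Hfp Hft.
  set k := maxD (evD Up).
  set U := U4 n Up Ut0.
  have hk : (0 <= k)%Z by apply maxD_ge0.
  have hUp : forall e, In e (evD Up) -> (0 < e <= k)%Z.
  { intros e He; split; [apply (i1 _ _ Hp); auto| apply maxD_ge; auto]. }
  have hmap : forall e, In e (map (shiftZ k) (evD Ut0)) -> exists e0, e = (e0 + k)%Z /\ In e0 (evD Ut0) /\ (0 < e0)%Z.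
  { intros e He; apply in_map_iff in He; destruct He as (e0 & <- & He0).
    have := i1 _ _ Ht e0 He0; intros; exists e0; rewrite shiftZ_pos; auto. }
  have hD : forall e, In e (evD Up ++ map (shiftZ k) (evD Ut0)) -> (0 < e)%Z.
  { intros e He; apply in_app_or in He; destruct He as [He|He];
      [have := hUp e He; lia| destruct (hmap e He) as (? & ? & ? & ?); lia]. }
  have hsh0 : forall a, shiftZ k a = 0%Z -> a = 0%Z.
  { intros a H; apply (shift_inj k); auto. }
  have hshm1 : forall a, shiftZ k a = (-1)%Z -> a = (-1)%Z.
  { intros a H; apply (shift_inj k); auto. }
  have hpreUp : forall c, In c (evD Up) -> pre U c = pre Up c.
  { intros c Hc; cbnU. destruct (existsb _ _) eqn:E; [reflexivity|].
    have : existsb (Z.eqb c) (evD Up) = true by apply existsb_In.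
    rewrite E; discriminate. }
  have hnot : forall c, ~ In c (evD Up) -> pre U c = (if (0 <? c)%Z then pre Ut0 (c - k) else pre Ut0 c).
  { intros c Hc; cbnU. destruct (existsb _ _) eqn:E; [|reflexivity].
    exfalso; apply Hc; apply existsb_In; exact E. }
  have hpreT : forall b, b = (-1)%Z \/ In b (evD Ut0) -> pre U (shiftZ k b) = pre Ut0 b.
  { intros b [->|Hb].
    - rewrite hnot; [reflexivity|]. intros H; have := hUp _ H; cbn; lia.
    - have := i1 _ _ Ht b Hb; intros hb. rewrite shiftZ_pos // hnot.
      + destruct (Z.ltb_spec 0 (b + k)); [|lia]. f_equal; lia.
      + intros H; have := hUp _ H; lia. }
  have hpre0 : pre U 0%Z = top.
  { rewrite hnot; [apply (i2a _ _ Ht)|]. intros H; have := hUp _ H; lia. }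
  have hprem1 : pre U (-1)%Z = top.
  { have := hpreT (-1)%Z (or_introl erefl); cbn; intros ->; apply (i2b _ _ Ht). }
  have i1U : forall e, In e (evD U) -> (0 < e)%Z by exact hD.
  have i3aU : forall j c, arel U j (-1)%Z c -> c = (-1)%Z.
  { intros j c H; cbnU in H; fold k in H.
    destruct H as [Hu|[Hu|[[Ha0 _]|[Ha0 _]]]]; [|  |lia|lia].
    - apply (i3a _ _ Hp j); apply Hu.
    - destruct Hu as ((a' & b' & Ha' & Hb' & Hab) & _).
      have Ha1 := hshm1 a' (esym Ha'); subst a'.
      have := i3a _ _ Ht _ _ Hab; intros ->; subst c; reflexivity. }
  have hwit : forall j, ta psi j || ta theta j -> exists k0, In k0 (evD Up ++ map (shiftZ k) (evD Ut0)) /\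
     (arel Up j 0%Z k0 \/ exists a' b', 0%Z = shiftZ k a' /\ k0 = shiftZ k b' /\ arel Ut0 j a' b').
  { intros j Hj; case/orP: Hj => Hj.
    - destruct (i6b _ _ Hp j Hj) as (k0 & Hin & Ha). exists k0; split; [apply in_or_app; left; auto|left; auto].
    - destruct (i6b _ _ Ht j Hj) as (k0 & Hin & Ha). exists (shiftZ k k0); split.
      + apply in_or_app; right; apply in_map; auto.
      + right; exists 0%Z, k0; split; [reflexivity|split; [reflexivity|auto]]. }
  have Hinv : invU U (ta (And psi theta)).
  { constructor.
    - exact i1U.
    - exact hpre0.
    - exact hprem1.
    - exact i3aU.
    - intros j; left; split; [apply (i3b _ _ Hp)|split; [right; left; auto|split; [right; left; auto|lia]]].
    - intros j a H; cbnU in H; fold k in H.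
      destruct H as [Hu|[Hu|[[Ha0 [_ HIn]]|[Ha0 [Hb _]]]]]; [unfold under in Hu; tauto|unfold under in Hu; tauto| |lia].
      have := hD _ HIn; lia.
    - intros j Hj c H; cbnU in H; fold k in H. simpl in Hj. rewrite negb_or in Hj. case/andP: Hj => Hj1 Hj2.
      destruct H as [Hu|[Hu|[[Ha0 [Hab HIn]]|[Ha0 [Hb _]]]]]; [unfold under in Hu; tauto|unfold under in Hu; tauto| |auto].
      destruct Hab as [Hab|(a' & b' & Ha' & Hb' & Hab)].
      + apply (i5 _ _ Hp j Hj1 c Hab).
      + have := hsh0 a' (esym Ha'); intros; subst a'.
        have := i5 _ _ Ht j Hj2 b' Hab; intros; subst; reflexivity.
    - intros j Hj c H; cbnU in H; fold k in H. simpl in Hj.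
      destruct H as [Hu|[Hu|[[Ha0 [Hab HIn]]|[Ha0 [Hb Hno]]]]]; [unfold under in Hu; tauto|unfold under in Hu; tauto|exact HIn|].
      exfalso; apply Hno; apply hwit; auto.
    - intros j Hj; simpl in Hj. destruct (hwit j Hj) as (k0 & Hin & Ha).
      exists k0; split; [exact Hin|]. cbnU; fold k. right; right; left; auto. }
  split; [exact Hinv|].
  intros M x; split.
  -
    apply (transfer_root M U Up (fun e' e => e' = e /\ inEv Up e /\ e <> 0%Z)) with (e0 := 0%Z); auto.
    + intros e' e [-> [HiE Hne]] j c' Ha' HiE'.
      destruct HiE as [He|[He|He]]; [lia| |].
      * subst e. have Hc := i3aU _ _ Ha'; subst c'.
        exists (-1)%Z; split; [apply (i3b _ _ Hp)|]; split; [split; [auto|split; [right; left; auto|lia]]|].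
        split; [right; left; auto|]. rewrite hprem1; apply (i2b _ _ Hp).
      * have := hUp _ He; intros [He1 He2].
        cbnU in Ha'; fold k in Ha'.
        destruct Ha' as [Hu|[Hu|[[Ha0 _]|[Ha0 _]]]]; [| |lia|lia].
        -- destruct Hu as (Ha & _ & HiEc & _ & Hc0). exists c'; split; [exact Ha|].
           split; [split; auto|]; split; [auto|].
           destruct HiEc as [Hc|[Hc|Hc]]; [lia|subst c'; rewrite hprem1; apply (i2b _ _ Hp)|].
           rewrite hpreUp //.
        -- exfalso. destruct Hu as (_ & HiEu & _). destruct HiEu as [H|[H|H]]; [lia|lia|].
           destruct (hmap _ H) as (? & ? & ? & ?); lia.
    + intros j Hj c' Ha' HiE'.
      have Hj2 : ~~ ta theta j by (have := Hdis j; rewrite Hj).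
      cbnU in Ha'; fold k in Ha'.
      destruct Ha' as [Hu|[Hu|[[_ [Hab HIn]]|[_ [Hb Hno]]]]]; [unfold under in Hu; tauto|unfold under in Hu; tauto| |].
      * destruct Hab as [Hab|(a' & b' & Ha' & Hb' & Hab)].
        -- have HIn' := i6a _ _ Hp j Hj c' Hab. have := hUp _ HIn'; intros [? ?].
           exists c'; split; [exact Hab|]; split; [split; [auto|split; [right; right; auto|lia]]|].
           split; [right; right; auto|]. rewrite hpreUp //.
        -- have := hsh0 a' (esym Ha'); intros; subst a'.
           have := i5 _ _ Ht j Hj2 b' Hab; intros; subst. have := hD _ HIn; cbn; lia.
      * exfalso; apply Hno. destruct (i6b _ _ Hp j Hj) as (k0 & Hin & Ha).
        exists k0; split; [apply in_or_app; left; auto|left; auto].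
  -
    apply (transfer_root M U Ut0 (fun e' e => e' = shiftZ k e /\ inEv Ut0 e /\ e <> 0%Z)) with (e0 := 0%Z); auto.
    + intros e' e [-> [HiE Hne]] j c' Ha' HiE'.
      destruct HiE as [He|[He|He]]; [lia| |].
      * subst e. have Hc := i3aU _ _ Ha'; subst c'.
        exists (-1)%Z; split; [apply (i3b _ _ Ht)|]; split; [split; [reflexivity|split; [right; left; auto|lia]]|].
        split; [right; left; auto|]. rewrite hprem1; apply (i2b _ _ Ht).
      * have He0 := i1 _ _ Ht e He.
        cbnU in Ha'; fold k in Ha'.
        destruct Ha' as [Hu|[Hu|[[Ha0 _]|[Ha0 _]]]]; [| |have := hsh0 _ Ha0; lia|have := hsh0 _ Ha0; lia].
        -- exfalso. destruct Hu as (_ & HiEu & _). rewrite shiftZ_pos in HiEu; auto.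
           destruct HiEu as [H|[H|H]]; [lia|lia|]. have := hUp _ H; lia.
        -- destruct Hu as ((a' & b' & Ha' & Hb' & Hab) & _ & HiEc & _ & Hc0).
           have Hae := shift_inj k _ _ hk Ha'; subst a'. subst c'.
           have Hb0 : b' <> 0%Z by (intros ->; apply (i4 _ _ Ht j e Hab)).
           have HiEb : inEv Ut0 b'.
           { destruct HiEc as [H|[H|H]]; [exfalso; apply Hb0; apply hsh0; auto|right; left; apply hshm1; auto|].
             apply in_map_iff in H; destruct H as (y & Hy & Hin).
             have := shift_inj k _ _ hk Hy; intros <-; right; right; auto. }
           exists b'; split; [exact Hab|]; split; [split; auto|]; split; [auto|].
           rewrite hpreT //. destruct HiEb as [H|[H|H]]; tauto.
    + intros j Hj c' Ha' HiE'.
      have Hj1 : ~~ ta psi j by (have := Hdis j; rewrite Hj andbT).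
      cbnU in Ha'; fold k in Ha'.
      destruct Ha' as [Hu|[Hu|[[_ [Hab HIn]]|[_ [Hb Hno]]]]]; [unfold under in Hu; tauto|unfold under in Hu; tauto| |].
      * destruct Hab as [Hab|(a' & b' & Ha' & Hb' & Hab)].
        -- have := i5 _ _ Hp j Hj1 c' Hab; intros; subst. have := hD _ HIn; lia.
        -- have := hsh0 a' (esym Ha'); intros; subst a'.
           have HIn' := i6a _ _ Ht j Hj b' Hab. have := i1 _ _ Ht _ HIn'; intros.
           exists b'; split; [exact Hab|]; split; [split; [auto|split; [right; right; auto|lia]]|].
           split; [right; right; auto|]. rewrite Hb' hpreT //; auto.
      * exfalso; apply Hno. destruct (i6b _ _ Ht j Hj) as (k0 & Hin & Ha).
        exists (shiftZ k k0); split; [apply in_or_app; right; apply in_map; auto|].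
        right; exists 0%Z, k0; split; [reflexivity|split; [reflexivity|auto]].
Qed.

Lemma Uphi_BB {n} (i : 'I_n) psi : dbi_normal psi -> Uphi (Bel i psi) = U23 n i top (Uphi psi).
Proof.
  intros H; have Hp := dbi_notprop _ H.
  destruct H as [j xi Hxi|j psi' Hpsi' Hnt|j xi psi' Hxi Hpsi' Hnt|a b Ha Hb Hd]; simpl in *; try rewrite Hp; try reflexivity.
  rewrite (dbi_notprop _ Ha); reflexivity.
Qed.

Lemma Uphi_BA {n} (i : 'I_n) xi psi : is_prop xi -> dbi_normal psi ->
  Uphi (Bel i (And xi psi)) = U23 n i xi (Uphi psi).
Proof. intros Hx Hp; simpl; rewrite Hx (dbi_notprop _ Hp); reflexivity. Qed.

Lemma main {n} (phi : form n) : dbi_normal phi ->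
  invU (Uphi phi) (ta phi) /\ forall M x, fsat M (Uphi phi) x 0%Z phi.
Proof.
  intros H; induction H as [i xi Hxi|i psi Hpsi IH Hnt|i xi psi Hxi Hpsi IH Hnt|a b Ha IHa Hb IHb Hd].
  - simpl; rewrite Hxi; apply U1_ok; auto.
  - rewrite Uphi_BB //. destruct IH as [Hi Hf].
    destruct (U23_ok i top (Uphi psi) psi Hi Hnt (dbi_top _ Hpsi) Hf) as (H1 & H2 & H3 & H4).
    split; [exact H1|]. intros M x u c Hk Hac HT. rewrite (H3 c Hac). apply H2.
  - rewrite Uphi_BA //. destruct IH as [Hi Hf].
    destruct (U23_ok i xi (Uphi psi) psi Hi Hnt (dbi_top _ Hpsi) Hf) as (H1 & H2 & H3 & H4).
    split; [exact H1|]. intros M x u c Hk Hac [HiE Hpre]. rewrite (H3 c Hac) in Hpre *.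
    cbn [fst snd] in Hpre. rewrite H4 in Hpre. split; [apply prop_fsat; auto|apply H2].
  - simpl. destruct IHa as [Hia Hfa]; destruct IHb as [Hib Hfb].
    apply U4_ok; auto; apply dbi_top; auto.
Qed.

Theorem theorem4 (n : nat) (Hn : 1 < n) (phi : form n) (M : kmodel n) (v : st M) :
  dbi_normal phi ->
  exists H : upd_defined M v (Uphi phi) 0%Z,
    sat (upd_model M (Uphi phi) v 0%Z) (upd_point H) phi.
Proof.
  intros Hd. destruct (main phi Hd) as [Hi Hf].
  assert (H : upd_defined M v (Uphi phi) 0%Z).
  { split; [left; reflexivity|]. rewrite (i2a _ _ Hi); simpl; tauto. }
  exists H. apply sat_fsat. simpl. apply Hf.
Qed.
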